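(* Let $\mathcal X,\mathcal U$ be finite nonempty sets, $f:\mathcal X\times\mathcal U\to\mathcal X$ and $\ell_1,\ell_2:\mathcal X\to\mathbb R$, and let $$v_{\mathrm{RR}}^*(x)=\max_{\mathbf u\in\mathbb U}\min\Big\{\max_{\tau\in\mathbb N}\ell_1(\xi_x^{\mathbf u}(\tau)),\max_{\tau\in\mathbb N}\ell_2(\xi_x^{\mathbf u}(\tau))\Big\}.$$ Then there is an augmented policy $\bar\pi\in\overline\Pi$ such that for all $x\in\mathcal X$, $$v_{\mathrm{RR}}^*(x)=\min\Big\{\max_{\tau\in\mathbb N}\ell_1(\bar\xi_x^{\bar\pi}(\tau)),\max_{\tau\in\mathbb N}\ell_2(\bar\xi_x^{\bar\pi}(\tau))\Big\}.$$
   Context: $\mathbb N=\{0,1,\dots\}$; $\mathbb U$ is the set of sequences $\mathbb N\to\mathcal U$; for $\mathbf u\in\mathbb U$: $\xi_x^{\mathbf u}(0)=x$, $\xi_x^{\mathbf u}(t+1)=f(\xi_x^{\mathbf u}(t),\mathbf u(t))$. Let $\mathcal Y=\{\ell_1(x):x\in\mathcal X\}$, $\mathcal Z=\{\ell_2(x):x\in\mathcal X\}$ and $\overline\Pi$ the set of maps $\bar\pi:\mathcal X\times\mathcal Y\times\mathcal Z\to\mathcal U$. For $\bar\pi\in\overline\Pi$: $\bar\xi_x^{\bar\pi}(0)=x$, $\bar y_x^{\bar\pi}(0)=\ell_1(x)$, $\bar z_x^{\bar\pi}(0)=\ell_2(x)$, $\bar\xi_x^{\bar\pi}(t+1)=f\big(\bar\xi_x^{\bar\pi}(t),\bar\pi(\bar\xi_x^{\bar\pi}(t),\bar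 y_x^{\bar\pi}(t),\bar z_x^{\bar\pi}(t))\big)$, $\bar y_x^{\bar\pi}(t+1)=\max\{\ell_1(\bar\xi_x^{\bar\pi}(t+1)),\bar y_x^{\bar\pi}(t)\}$, $\bar z_x^{\bar\pi}(t+1)=\max\{\ell_2(\bar\xi_x^{\bar\pi}(t+1)),\bar z_x^{\bar\pi}(t)\}$. *)

(* Defs.v *)
From mathcomp Require Import all_boot all_order all_algebra.
From mathcomp Require Import boolp classical_sets reals.
Set Implicit Arguments. Unset Strict Implicit. Unset Printing Implicit Defensive.
Import Order.TTheory GRing.Theory Num.Theory.
Local Open Scope ring_scope.
Local Open Scope classical_set_scope.

Fixpoint traj (X U : Type) (f : X -> U -> X) (x : X) (u : nat -> U) (t : nat) : X :=
  match t with
  | 0 => x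
  | t'.+1 => f (traj f x u t') (u t')
  end.

Fixpoint aug_traj (R : realType) (X U : Type) (f : X -> U -> X) (l1 l2 : X -> R)
  (pib : X -> R -> R -> U) (x : X) (t : nat) : X * R * R :=
  match t with
  | 0 => (x, l1 x, l2 x)
  | t'.+1 =>
      let: (s, y, z) := aug_traj f l1 l2 pib x t' in
      let s' := f s (pib s y z) in
      (s', Num.max (l1 s') y, Num.max (l2 s') z)
  end.

(* max_{tau in N} l (traj tau): written as a supremum (it is attained, X finite) *)
Definition maxN (R : realType) (g : nat -> R) : R := sup (range g).

Definition vRR (R : realType) (X U : Type) (f : X -> U -> X) (l1 l2 : X -> R) (x : X) : R :=
  sup (range (fun u : nat -> U =>
    Num.min (maxN (fun t => l1 (traj f x u t))) (maxN (fun t => l2 (traj f x u t))))).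

(* Main.v *)
Require Import Defs.
From mathcomp Require Import all_boot all_order all_algebra.
From mathcomp Require Import boolp classical_sets reals.
Import Order.TTheory GRing.Theory Num.Theory.
Local Open Scope ring_scope.
Local Open Scope classical_set_scope.

Section Aux.
Variables (R : realType).

Lemma sup_eqm (E : set R) (m : R) : E m -> (forall y, E y -> y <= m) -> sup E = m.
Proof.
move=> Em ub; apply/eqP; rewrite eq_le; apply/andP; split.
  by apply: ge_sup; [exists m | move=> y /ub].
by apply: ub_le_sup => //; exists m => y /ub.
Qed.

Lemma fin_max (T : finType) (v : T -> R) (P : T -> Prop) :
  (exists i, P i) -> exists m, P m /\ forall i, P i -> v i <= v m.
Proof.
case=> i0 Pi0.
pose A : {pred T} := fun i => `[< P i >].
have A0 : A i0 by apply/asboolP.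
case: (arg_maxP v A0) => m /asboolP Pm Hm.
by exists m; split => // i Pi; apply: Hm; apply/asboolP.
Qed.

Lemma max_or (a b : R) : Num.max a b = a \/ Num.max a b = b.
Proof.
by rewrite maxEle; case: ifP; [right|left].
Qed.

Variables (X U : finType) (f : X -> U -> X) (l1 l2 : X -> R) (a0 : U).

Lemma maxN_spec (xi : nat -> X) (l : X -> R) :
  exists t0, maxN (fun t => l (xi t)) = l (xi t0) /\ forall t, l (xi t) <= l (xi t0).
Proof.
have [m [[t0 Ht0] Hm]] := @fin_max _ l (fun x => exists t, xi t = x) (ex_intro _ (xi 0%N) (ex_intro _ 0%N erefl)).
subst m; exists t0; split; last by move=> t; apply: Hm; exists t.
apply: sup_eqm; first by exists t0.
by move=> _ [t _ <-]; apply: Hm; exists t.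
Qed.

Lemma runmax (xi : nat -> X) (l : X -> R) (y : nat -> R) :
  y 0%N = l (xi 0%N) -> (forall t, y t.+1 = Num.max (l (xi t.+1)) (y t)) ->
  (forall t, y t <= maxN (fun t => l (xi t))) /\
  exists T, forall t, (T <= t)%N -> y t = maxN (fun t => l (xi t)).
Proof.
move=> y0 yS; have [t0 [-> Ht0]] := maxN_spec xi l.
have ub : forall t, y t <= l (xi t0).
  elim=> [|t IH]; first by rewrite y0.
  by rewrite yS ge_max Ht0 IH.
have lb : forall t, l (xi t) <= y t.
  by case=> [|t]; [rewrite y0 | rewrite yS le_max lexx].
have mono : forall t k, y t <= y (t + k)%N.
  move=> t; elim=> [|k IH]; first by rewrite addn0.
  by rewrite addnS yS le_max IH orbT.
split=> //; exists t0 => t Ht; apply/eqP; rewrite eq_le ub /=.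
by rewrite -(subnKC Ht); apply: le_trans (lb t0) (mono _ _).
Qed.

Definition G (a : U) (p : X * R * R) : X * R * R :=
  let: (s, y, z) := p in
  let s' := f s a in (s', Num.max (l1 s') y, Num.max (l2 s') z).

Fixpoint atraj (p : X * R * R) (u : nat -> U) (t : nat) : X * R * R :=
  match t with 0 => p | t'.+1 => G (u t') (atraj p u t') end.

Definition g (p : X * R * R) : R := Num.min p.1.2 p.2.

Lemma atraj_shift p u t :
  atraj p u t.+1 = atraj (G (u 0%N) p) (fun k => u k.+1) t.
Proof. by elim: t => [|t IH] //=; rewrite -IH. Qed.

Lemma traj_atraj x u t : (atraj (x, l1 x, l2 x) u t).1.1 = traj f x u t.
Proof.
elim: t => [|t IH] //=; move: IH; case: (atraj _ u t) => [[s y] z] /= -> //.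
Qed.

Lemma Obj (p : nat -> X * R * R) :
  p 0%N = ((p 0%N).1.1, l1 (p 0%N).1.1, l2 (p 0%N).1.1) ->
  (forall t, exists a, p t.+1 = G a (p t)) ->
  (forall t, g (p t) <= Num.min (maxN (fun t => l1 (p t).1.1)) (maxN (fun t => l2 (p t).1.1))) /\
  exists T, g (p T) = Num.min (maxN (fun t => l1 (p t).1.1)) (maxN (fun t => l2 (p t).1.1)).
Proof.
move=> p0 pS.
have y0 : (p 0%N).1.2 = l1 (p 0%N).1.1 by rewrite {1}p0.
have z0 : (p 0%N).2 = l2 (p 0%N).1.1 by rewrite {1}p0.
have yS : forall t, (p t.+1).1.2 = Num.max (l1 (p t.+1).1.1) (p t).1.2.
  move=> t; have [a ->] := pS t; by case: (p t) => [[s y] z].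
have zS : forall t, (p t.+1).2 = Num.max (l2 (p t.+1).1.1) (p t).2.
  move=> t; have [a ->] := pS t; by case: (p t) => [[s y] z].
have [ub1 [T1 H1]] := @runmax (fun t => (p t).1.1) l1 (fun t => (p t).1.2) y0 yS.
have [ub2 [T2 H2]] := @runmax (fun t => (p t).1.1) l2 (fun t => (p t).2) z0 zS.
split.
  move=> t; rewrite /g le_min !ge_min ub1 ub2 /=; by rewrite orbT.
exists (maxn T1 T2); rewrite /g H1 ?leq_maxl // H2 // leq_maxr //.
Qed.

Definition val (s : X * R * R) (o : option X * option X) : R :=
  Num.min (oapp l1 s.1.2 o.1) (oapp l2 s.2 o.2).

Lemma achievable_val s u t : exists o, g (atraj s u t) = val s o.
Proof.
suff [o1 [o2 [H1 H2]]] : exists o1 o2, (atraj s u t).1.2 = oapp l1 s.1.2 o1 /\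
                              (atraj s u t).2 = oapp l2 s.2 o2.
  by exists (o1, o2); rewrite /g /val H1 H2.
elim: t => [|t [o1 [o2 [H1 H2]]]]; first by exists None, None.
rewrite /=; move: H1 H2; case: (atraj s u t) => [[x y] z] /= -> ->.
case: (max_or (l1 (f x (u t))) (oapp l1 s.1.2 o1)) => ->;
case: (max_or (l2 (f x (u t))) (oapp l2 s.2 o2)) => ->.
- by exists (Some (f x (u t))), (Some (f x (u t))).
- by exists (Some (f x (u t))), o2.
- by exists o1, (Some (f x (u t))).
- by exists o1, o2.
Qed.

Lemma Wex s : exists w, (exists u t, g (atraj s u t) = w) /\ (forall u t, g (atraj s u t) <= w).
Proof.
have [m [[u [t Hm]] Hmax]] := @fin_max _ (val s)
  (fun o => exists u t, g (atraj s u t) = val s o)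
  (ex_intro _ (None, None) (ex_intro _ (fun _ => a0) (ex_intro _ 0%N erefl))).
exists (val s m); split; first by exists u, t.
move=> u' t'; have [o Ho] := achievable_val s u' t'.
by rewrite Ho; apply: Hmax; exists u', t'.
Qed.

Definition W s := projT1 (cid (Wex s)).
Lemma WP s : (exists u t, g (atraj s u t) = W s) /\ (forall u t, g (atraj s u t) <= W s).
Proof. exact: (projT2 (cid (Wex s))). Qed.

Lemma Dex s : exists n, (fun n => `[< exists u, g (atraj s u n) = W s >]) n.
Proof. have [[u [t H]] _] := WP s; exists t; apply/asboolP; by exists u. Qed.

Definition D s := ex_minn (Dex s).

Lemma Dwit s : exists u, g (atraj s u (D s)) = W s.
Proof. rewrite /D; case: ex_minnP => n /asboolP H _; exact H. Qed.

Lemma Dmin s n u : g (atraj s u n) = W s -> (D s <= n)%N.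
Proof.
move=> H; rewrite /D; case: ex_minnP => m _ Hmin; apply: Hmin.
by apply/asboolP; exists u.
Qed.

Definition uS s := projT1 (cid (Dwit s)).
Lemma huS s : g (atraj s (uS s) (D s)) = W s.
Proof. exact: (projT2 (cid (Dwit s))). Qed.

Definition pol (p : X * R * R) : U := uS p 0%N.

Definition cl (p : X * R * R) (t : nat) := iter t (fun q => G (pol q) q) p.

Lemma W_mono a s : W (G a s) <= W s.
Proof.
have [[u [t <-]] _] := WP (G a s).
pose v := fun k => if k is k'.+1 then u k' else a.
have -> : atraj (G a s) u t = atraj s v t.+1 by rewrite atraj_shift.
exact: (WP s).2.
Qed.

Lemma key m : forall s, (D s <= m)%N -> exists t, W s <= g (cl s t).
Proof.
have zero : forall s, D s = 0%N -> exists t, W s <= g (cl s t).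
  by move=> s Ds; exists 0%N; have := huS s; rewrite Ds /= => ->.
elim: m => [|m IH] s Hs.
  by apply: zero; move: Hs; rewrite leqn0 => /eqP.
case Ds: (D s) => [|k]; first exact: zero.
have H := huS s; rewrite Ds atraj_shift in H.
set s1 := G (uS s 0%N) s in H.
have W1 : W s1 = W s.
  apply/eqP; rewrite eq_le W_mono /= -H; exact: (WP s1).2.
have [t Ht] : exists t, W s1 <= g (cl s1 t).
  apply: IH; apply: leq_trans (@Dmin _ _ _ (etrans H (esym W1))) _.
  by move: Hs; rewrite Ds ltnS.
by exists t.+1; rewrite -W1 /cl iterSr.
Qed.

End Aux.

Theorem mainTheorem16 (R : realType) (X U : finType)
  (hX : (0 < #|X|)%N) (hU : (0 < #|U|)%N)
  (f : X -> U -> X) (l1 l2 : X -> R) :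
  exists pib : X -> R -> R -> U,
    forall x : X,
      vRR f l1 l2 x =
      Num.min (maxN (fun t => l1 (aug_traj f l1 l2 pib x t).1.1))
              (maxN (fun t => l2 (aug_traj f l1 l2 pib x t).1.1)).
Proof.
have /card_gt0P [a0 _] := hU.
pose P := @pol R X U f l1 l2 a0.
exists (fun s y z => P (s, y, z)) => x.
set pib := (fun s y z => P (s, y, z)).
pose s0 := (x, l1 x, l2 x).
pose Wf := @W R X U f l1 l2 a0.
have step : forall t, aug_traj f l1 l2 pib x t.+1 =
   @G R X U f l1 l2 (P (aug_traj f l1 l2 pib x t)) (aug_traj f l1 l2 pib x t).
  by move=> t /=; case: (aug_traj f l1 l2 pib x t) => [[s y] z].
have Hcl : forall t, aug_traj f l1 l2 pib x t = @cl R X U f l1 l2 a0 s0 t.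
  by elim=> // t IH; rewrite step IH.
have Hopen : forall t, aug_traj f l1 l2 pib x t =
    @atraj R X U f l1 l2 s0 (fun k => P (aug_traj f l1 l2 pib x k)) t.
  by elim=> // t IH; rewrite step /= -IH.
have [ob1 [T HT]] := @Obj R X U f l1 l2 (fun t => aug_traj f l1 l2 pib x t) erefl
   (fun t => ex_intro _ _ (step t)).
have hO := fun u => @Obj R X U f l1 l2 (@atraj R X U f l1 l2 s0 u) erefl
   (fun t => ex_intro _ (u t) erefl).
have VW : vRR f l1 l2 x = Wf s0.
  rewrite /vRR.
  have -> : (fun u : nat -> U => Num.min (maxN (fun t => l1 (traj f x u t)))
                                    (maxN (fun t => l2 (traj f x u t)))) =
     (fun u => Num.min (maxN (fun t => l1 (@atraj R X U f l1 l2 s0 u t).1.1))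
                       (maxN (fun t => l2 (@atraj R X U f l1 l2 s0 u t).1.1))).
    apply/funext => u; congr (Num.min (maxN _) (maxN _)); apply/funext => t;
    by rewrite traj_atraj.
  have [[u [t Hut]] Wub] := @WP R X U f l1 l2 a0 s0.
  apply: sup_eqm.
    exists u => //; have [o1 [T' H']] := hO u; rewrite -H'.
    apply/eqP; rewrite eq_le Wub /=; have := o1 t; rewrite -H' Hut //.
  move=> _ [v _ <-]; have [_ [T' <-]] := hO v; exact: Wub.
rewrite VW -HT; apply/eqP; rewrite eq_le; apply/andP; split.
  have [t Ht] := @key R X U f l1 l2 a0 _ s0 (leqnn _).
  rewrite -Hcl in Ht; apply: le_trans Ht _; rewrite HT; exact: ob1.
rewrite Hopen; apply: (@WP R X U f l1 l2 a0 s0).2.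
Qed.
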